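(* Let $t$ be a positive integer, $n\ge 4t^2+10t$, and let $c\ge 3$ be an integer with $n\ge (t+1)c-1$. Then $$\lambda_1\big(D(K_{2t-1}\vee(K_{n-2t}+K_1))\big)<n+2\le \lambda_1\big(D(K_{tc-1}\vee(K_{n-(t+1)c+2}+(c-1)K_1))\big).$$
   Context: For a connected graph $G$, $D(G)$ is the distance matrix and $\lambda_1(D(G))$ its largest eigenvalue. $K_m$ is the complete graph, $+$ is disjoint union, $(c-1)K_1$ is $c-1$ isolated vertices, $\vee$ is the join (disjoint union plus all edges between the two parts). *)

(* Defs.v *)
From HB Require Import structures.
From mathcomp Require Import all_boot all_order all_algebra.
From mathcomp Require Import classical_sets reals.
Set Implicit Arguments. Unset Strict Implicit. Unset Printing Implicit Defensive.
Import Order.TTheory GRing.Theory Num.Theory.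

Definition complete_graph (m : nat) : rel 'I_m := fun x y => x != y.
Definition empty_graph (m : nat) : rel 'I_m := fun _ _ => false.

Definition gunion (T1 T2 : finType) (e1 : rel T1) (e2 : rel T2) : rel (T1 + T2)%type :=
  fun x y => match x, y with
             | inl a, inl b => e1 a b
             | inr a, inr b => e2 a b
             | _, _ => false
             end.

Definition gjoin (T1 T2 : finType) (e1 : rel T1) (e2 : rel T2) : rel (T1 + T2)%type :=
  fun x y => match x, y with
             | inl a, inl b => e1 a b
             | inr a, inr b => e2 a b
             | _, _ => true
             end.

Fixpoint reach (T : finType) (e : rel T) (k : nat) (x y : T) : bool :=
  match k with
  | 0 => x == y
  | k'.+1 => reach e k' x y || [exists z, reach e k' x z && e z y]
  end.

(* graph distance: least k with a walk of length k from x to y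
   (defaults to #|T| if y is unreachable; irrelevant for connected graphs) *)
Definition gdist (T : finType) (e : rel T) (x y : T) : nat :=
  find (fun k => reach e k x y) (iota 0 #|T|).

Definition distmx (R : realType) (T : finType) (e : rel T) : 'M[R]_#|T| :=
  (\matrix_(i, j) (gdist e (enum_val i) (enum_val j))%:R)%R.

(* largest eigenvalue of a real square matrix (for symmetric matrices all
   eigenvalues are real, and the spectrum is finite and nonempty) *)
Definition lambda1 (R : realType) (m : nat) (A : 'M[R]_m) : R :=
  sup [set a : R | eigenvalue A a].

Arguments complete_graph : clear implicits.
Arguments empty_graph : clear implicits.

(* Main.v *)
Require Import Defs.
From HB Require Import structures.
From mathcomp Require Import all_boot all_order all_algebra.
From mathcomp Require Import classical_sets reals.
From mathcomp Require Import ring lra zify.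
From mathcomp Require Import topology normedtype derive.
Import Order.TTheory GRing.Theory Num.Theory.
Import numFieldNormedType.Exports.

Section G.
Variables (T : finType) (e : rel T).

Lemma exz1 x y : [exists z, (x == z) && e z y] = e x y.
Proof.
apply/existsP/idP => [[z /andP[/eqP-> //]]|h].
by exists x; rewrite eqxx.
Qed.

Lemma gdist0 x : (0 < #|T|)%N -> gdist e x x = 0%N.
Proof. rewrite /gdist; case: #|T| => //= k _; by rewrite eqxx. Qed.

Lemma gdist1 x y : (1 < #|T|)%N -> x != y -> e x y -> gdist e x y = 1%N.
Proof.
rewrite /gdist; case: #|T| => [|[|k]] //= _ /negbTE hxy exy.
by rewrite hxy exz1 exy.
Qed.

Lemma gdist2 x y z : (2 < #|T|)%N -> x != y -> ~~ e x y -> e x z -> e z y ->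
  gdist e x y = 2%N.
Proof.
rewrite /gdist; case: #|T| => [|[|[|k]]] //= _ /negbTE hxy /negbTE nexy exz ezy.
rewrite hxy exz1 nexy /=.
suff -> : [exists z0, ((x == z0) || [exists z1, (x == z1) && e z1 z0]) && e z0 y] by [].
by apply/existsP; exists z; rewrite exz1 exz orbT.
Qed.
End G.

Section Fam.
Variables (k l : nat) (S : finType) (f : rel S).
Hypothesis hf : forall a b, f a b = false.
Hypothesis hk : (0 < k)%N.
Local Notation T := ('I_k + ('I_l + S))%type.
Hypothesis h3 : (2 < #|{: T}|)%N.
Local Notation e := (gjoin (complete_graph k) (gunion (complete_graph l) f)).

Definition dd (x y : T) : nat :=
 if x == y then 0%N else match x, y with
 | inr (inl _), inr (inr _) | inr (inr _), inr (inl _) | inr (inr _), inr (inr _) => 2%N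
 | _, _ => 1%N end.

Lemma gdist_fam x y : gdist e x y = dd x y.
Proof.
rewrite /dd; case: (eqVneq x y) => [->|hxy]; first by apply: gdist0; apply: leq_trans h3.
have h1 : (1 < #|{: T}|)%N by apply: ltnW.
have z0 : T := inl (Ordinal hk).
case: x hxy => [a|[a|a]]; case: y => [b|[b|b]] hxy;
  try (by apply: gdist1 => //=; rewrite /complete_graph; apply: contraNneq hxy => ->);
  apply: (@gdist2 _ _ _ _ (inl (Ordinal hk))) => //=; by rewrite hf.
Qed.
End Fam.
Arguments dd {k l S}.

Local Open Scope ring_scope.

Lemma sum_if (R : nmodType) (T : finType) (x : T) (u v : R) :
  \sum_y (if y == x then u else v) + v = u + v *+ #|T|.
Proof.
rewrite (bigD1 x) //= eqxx -addrA; congr (_ + _).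
rewrite (eq_bigr (fun=> v)) => [|y /negbTE -> //]; rewrite sumr_const.
have := cardC1 x; rewrite /predC1 => ->.
have: (0 < #|T|)%N by apply/card_gt0P; exists x.
by case: #|T| => //= k _; rewrite mulrSr.
Qed.

Lemma eig_bound (R : realFieldType) m (A : 'M[R]_m) (w : 'I_m -> R) a :
  (forall i, 0 < w i) -> eigenvalue A a ->
  exists j, `|a| * w j <= \sum_i w i * `|A i j|.
Proof.
move=> wpos /eigenvalueP [v hv vnz].
have [j0 vj0] : exists j, v 0 j != 0.
  apply/existsP; apply: contraNT vnz; rewrite negb_exists => /forallP H.
  by apply/eqP/rowP => j; rewrite !mxE; apply/eqP; rewrite -[_ == _]negbK H.
pose g j := `|v 0 j| / w j.
case: (@arg_maxP _ R _ j0 predT g isT) => j _ jmax.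
exists j.
have gj0 : 0 < g j.
  apply: lt_le_trans (jmax j0 isT); rewrite /g divr_gt0 ?normr_gt0 //.
have ej : a * v 0 j = \sum_i v 0 i * A i j.
  by have := congr1 (fun M : 'M_(1,m) => M 0 j) hv; rewrite !mxE => <-.
have : `|a| * `|v 0 j| <= g j * \sum_i w i * `|A i j|.
  rewrite -normrM ej mulr_sumr; apply: le_trans (ler_norm_sum _ _ _) _.
  apply: ler_sum => i _; rewrite normrM mulrA ler_wpM2r //.
  by have := jmax i isT; rewrite /= {1}/g ler_pdivrMr.
have -> : `|v 0 j| = g j * w j by rewrite /g mulrVK // unitfE gt_eqF.
by rewrite mulrCA ler_pM2l.
Qed.

Lemma sum_ev (R : nmodType) (T : finType) (F : T -> R) :
  (\sum_(i < #|T|) F (enum_val i) = \sum_x F x)%R.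
Proof. by rewrite -(big_enum_val F) ; apply: eq_bigl => x; rewrite inE. Qed.

Lemma sum_if_ord (R : pzRingType) m (a : 'I_m) (u v : R) :
  \sum_(y : 'I_m) (if y == a then u else v) = u + m%:R * v - v.
Proof. by apply/(addIr v); rewrite sum_if card_ord mulr_natl subrK. Qed.

Lemma sum_const_ord (R : pzRingType) m (c : R) : \sum_(y < m) c = m%:R * c.
Proof. by rewrite sumr_const card_ord mulr_natl. Qed.

Lemma sum_if2 (R : pzRingType) m (a : 'I_m) (c : R) d (P : 'I_m -> bool) :
  (forall i, P i = (i == a)) ->
  \sum_i c * (if P i then 0%N else d)%:R = m%:R * (c * d%:R) - c * d%:R.
Proof.
move=> hP; rewrite (_ : _ - _ = \sum_i (if i == a then 0 else c * d%:R)); last by rewrite sum_if_ord add0r.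
apply: eq_bigr => i _.
by rewrite hP; case: eqP; rewrite ?mulr0.
Qed.

Lemma block_sum (R : comPzRingType) k l m (x1 x2 x3 : R) (x : 'I_k + ('I_l + 'I_m)) :
  \sum_y (match y with inl _ => x1 | inr (inl _) => x2 | inr (inr _) => x3 end)
      * (dd y x)%:R =
  match x with
  | inl _ => k%:R * x1 - x1 + l%:R * x2 + m%:R * x3
  | inr (inl _) => k%:R * x1 + l%:R * x2 - x2 + 2 * m%:R * x3
  | inr (inr _) => k%:R * x1 + 2 * l%:R * x2 + 2 * m%:R * x3 - 2 * x3
  end.
Proof.
rewrite big_sumType big_sumType /dd.
case: x => [a|[a|a]] /=; rewrite ?(@sum_if2 _ _ a) // !sum_const_ord; ring.
Qed.

Section Lam.
Local Open Scope classical_set_scope.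
Variable R : realType.

Lemma lambda1_le m (A : 'M[R]_m) b :
  (forall a, eigenvalue A a -> a <= b) -> 0 <= b -> lambda1 A <= b.
Proof.
move=> hb b0; rewrite /lambda1.
have [ne|ne] := boolp.pselect ([set a : R | eigenvalue A a] !=set0).
  by apply: ge_sup ne _ => a /= /hb.
rewrite (_ : [set a : R | eigenvalue A a] = set0) ?sup0 //.
apply: boolp.funext => x; apply: boolp.propext; split => // hx.
by apply: ne; exists x.
Qed.

Lemma lambda1_ge m (A : 'M[R]_m) a B :
  (forall a', eigenvalue A a' -> a' <= B) -> eigenvalue A a -> a <= lambda1 A.
Proof.
move=> hB ha; rewrite /lambda1; apply: ub_le_sup => //.
by exists B => x /= /hB.
Qed.
End Lam.

Section G1.
Variable R : realType.

Lemma fin_bound (N A : R) : 0 < N + 2 -> A * (N + 2) <= (N + 2) ^+ 2 - 1 ->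
  A <= N + 2 - (N + 2)^-1.
Proof.
move=> N0 h; have -> : N + 2 - (N + 2)^-1 = ((N + 2) ^+ 2 - 1) / (N + 2).
  by field; rewrite gt_eqF.
by rewrite ler_pdivlMr.
Qed.

Lemma g1 (t n : nat) : (0 < t)%N -> (4 * t ^ 2 + 10 * t <= n)%N ->
  lambda1 (distmx R
     (gjoin (complete_graph (2 * t - 1)%N)
            (gunion (complete_graph (n - 2 * t)%N) (complete_graph 1))))
     < (n + 2)%N%:R.
Proof.
move=> ht hn.
have hk : (0 < 2 * t - 1)%N by lia.
have hf : forall a b : 'I_1, complete_graph 1 a b = false.
  by move=> a b; rewrite /complete_graph (ord1 a) (ord1 b) eqxx.
have h3 : (2 < #|{: 'I_(2 * t - 1) + ('I_(n - 2 * t) + 'I_1)}|)%N.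
  by rewrite !card_sum !card_ord; lia.
set N : R := n%:R; set Tt : R := t%:R.
have ek : ((2 * t - 1)%N%:R : R) = 2 * Tt - 1 by rewrite natrB ?natrM //; lia.
have el : ((n - 2 * t)%N%:R : R) = N - 2 * Tt by rewrite natrB ?natrM //; lia.
have ew : ((2 * n - 2 * t)%N%:R : R) = 2 * N - 2 * Tt by rewrite natrB ?natrM //; lia.
have e2 : ((n + 2)%N%:R : R) = N + 2 by rewrite natrD.
have hTN : 4 * Tt ^+ 2 + 10 * Tt <= N.
  by move: hn; rewrite -(ler_nat R) natrD !natrM expr2.
have hT1 : 1 <= Tt by rewrite /Tt ler1n.
rewrite natrD -/N.
have N0 : 0 < N + 2 by nra.
apply: (le_lt_trans (@lambda1_le _ _ _ (N + 2 - (N + 2)^-1) _ _)); last first.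
- by rewrite ltrBlDr ltrDl invr_gt0.
- rewrite subr_ge0; apply: (@le_trans _ _ 1); last by nra.
  by rewrite invf_le1 //; nra.
move=> a ha.
pose w (i : 'I_#|{: 'I_(2 * t - 1) + ('I_(n - 2 * t) + 'I_1)}|) : R := match enum_val i with inl _ => N + 2 | inr (inl _) => N + 2
                | inr (inr _) => ((2 * n - 2 * t)%N)%:R end.
have wpos : forall i, 0 < w i.
  by move=> i; rewrite /w; case: (enum_val i) => [?|[?|?]] //; rewrite ew; nra.
have [j hj] := @eig_bound _ _ _ _ _ wpos ha.
rewrite (eq_bigr (fun i => w i * (dd (enum_val i) (enum_val j))%:R)) in hj; last first.
  by move=> i _; rewrite /distmx mxE gdist_fam // normr_nat.
rewrite /w (@sum_ev _ _ (fun y => (match y with inl _ => N + 2 | inr (inl _) => N + 2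
   | inr (inr _) => ((2 * n - 2 * t)%N)%:R end) * (dd y (enum_val j))%:R)) block_sum in hj.
apply: le_trans (ler_norm a) _; apply: fin_bound => //.
move: hj; case: (enum_val j) => [b|[b|b]]; rewrite ek el ew => hj.
- by apply: le_trans hj _; nra.
- by apply: le_trans hj _; nra.
have D0 : 0 < 2 * N - 2 * Tt by nra.
have h2 := ler_wpM2r (ltW N0) hj.
rewrite -(ler_pM2l D0); apply: le_trans (_ : _ <= ((2 * Tt - 1) * (N + 2) + 2 * (N - 2 * Tt) * (N + 2)) * (N + 2)) _.
  by rewrite mulrCA mulrA [_ * (N + 2)]mulrC; apply: le_trans h2 _; nra.
nra.
Qed.
End G1.

Lemma poly_root (R : realType) (p : {poly R}) (a b : R) :
  a <= b -> 0 <= p.[a] -> p.[b] <= 0 -> exists2 r, a <= r & p.[r] = 0.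
Proof.
move=> ab pa pb.
have [||r] := @IVT R (horner p) a b 0 ab.
- by apply/continuous_subspaceT => ?; exact: continuous_horner.
- by apply/andP; split; rewrite /Num.min /Num.max; case: ltP => h; lra.
- rewrite in_itv /= => /andP[ar _] hr; by exists r.
Qed.

Lemma eig_le_total (R : realFieldType) m (A : 'M[R]_m) a :
  eigenvalue A a -> a <= \sum_i \sum_j `|A i j|.
Proof.
move=> ha; have [j hj] := @eig_bound _ _ A (fun=> 1) a (fun=> ltr01) ha.
rewrite mulr1 in hj; apply: le_trans (ler_norm a) _; apply: le_trans hj _.
apply: ler_sum => i _; rewrite mul1r (bigD1 j) //= lerDl.
by apply: sumr_ge0 => *.
Qed.

Lemma key_pos (t c m : nat) : (1 <= t)%N -> (3 <= c)%N -> (4*t^2+10*t+1 <= (t+1)*c + m)%N ->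
 (12*c + 6* m^2 + 26* m + 27 + 18*t*c + 8*t*c* m + 4*t*c^2 + 3*t^2*c^2 <=
  c^3 + t*c^3 + 2*c^2 + 4*c^2* m + 3*c* m^2 + c* m + 2*t*c^2* m)%N.
Proof. move=> *. nia. Qed.

Section G2.
Variable R : realType.

Lemma g2 (t n c : nat) : (0 < t)%N -> (4 * t ^ 2 + 10 * t <= n)%N ->
  (3 <= c)%N -> ((t + 1) * c - 1 <= n)%N ->
  (n + 2)%N%:R <=
     lambda1 (distmx R
     (gjoin (complete_graph (t * c - 1)%N)
            (gunion (complete_graph (n + 2 - (t + 1) * c)%N) (empty_graph (c - 1)%N)))).
Proof.
move=> ht hn hc hnc.
have hk : (0 < t * c - 1)%N by nia.
have hf : forall a b : 'I_(c - 1), empty_graph (c - 1) a b = false by [].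
have h3 : (2 < #|{: 'I_(t * c - 1) + ('I_(n + 2 - (t + 1) * c) + 'I_(c - 1))}|)%N.
  by rewrite !card_sum !card_ord; lia.
have hl : (0 < n + 2 - (t + 1) * c)%N by lia.
set m := (n + 1 - (t + 1) * c)%N.
set K : R := (t * c - 1)%N%:R; set L : R := (n + 2 - (t + 1) * c)%N%:R.
set S : R := (c - 1)%N%:R.
pose x2 (r : R) := (r + 1) * (r + 2).
pose x3 (r : R) := (r + 1) * (r + L + 1).
pose x1 (r : R) := x2 r - S * (r + L + 1).
pose F (r : R) := (K - 1 - r) * x1 r + L * x2 r + S * x3 r.
pose p : {poly R} := ((K - 1)%:P - 'X) * (('X + 1%:P) * ('X + 2%:P) - S%:P * ('X + (L + 1)%:P))
   + L%:P * (('X + 1%:P) * ('X + 2%:P)) + S%:P * (('X + 1%:P) * ('X + (L + 1)%:P)).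
have pF r : p.[r] = F r.
  by rewrite /p /F /x1 /x2 /x3 !(hornerD, hornerM, hornerN, hornerC, hornerX); ring.
set T : R := t%:R; set C : R := c%:R; set Mm : R := m%:R.
have eK : K = T * C - 1 by rewrite /K natrB ?natrM //; nia.
have eL : L = Mm + 1 by rewrite /L (_ : (n + 2 - (t + 1) * c = m + 1)%N) ?natrD // /m; lia.
have eS : S = C - 1 by rewrite /S natrB //; lia.
have eN : (n + 2)%N%:R = (T + 1) * C + Mm + 1 :> R.
  rewrite (_ : (n + 2 = (t + 1) * c + m + 1)%N); last by rewrite /m; lia.
  by rewrite !natrD natrM natrD.
have h4 : (4*t^2+10*t+1 <= (t+1)*c + m)%N by rewrite /m; nia.
have hkey := @key_pos t c m ht hc h4.
move: hkey; rewrite -(ler_nat R) !(natrD, natrX, natrM) -/T -/C -/Mm => hkey.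
have hT1 : 1 <= T by rewrite /T ler1n.
have hC3 : 3 <= C by rewrite /C ler_nat.
have hM0 : 0 <= Mm by rewrite /Mm ler0n.
have F0 : 0 <= F ((n + 2)%N%:R).
  by rewrite eN /F /x1 /x2 /x3 eK eL eS; nra.
have hQ : (0 <= (64 + 91 * m + 38 * m ^ 2 + 4 * m ^ 3 + 68 * c + 49 * c * m + 4 * c * m ^ 2
   + 18 * c ^ 2 + 80 * t * c + 69 * t * c * m + 12 * t * c * m ^ 2 + 54 * t * c ^ 2
   + 15 * t * c ^ 2 * m + 6 * t * c ^ 3 + 32 * t ^ 2 * c ^ 2 + 12 * t ^ 2 * c ^ 2 * m
   + 10 * t ^ 2 * c ^ 3 + 4 * t ^ 3 * c ^ 3)%N%:R :> R) by apply: ler0n.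
move: hQ; rewrite !(natrD, natrX, natrM) -/T -/C -/Mm => hQ.
have F1 : F (2 * (n + 2)%N%:R) <= 0.
  by rewrite eN /F /x1 /x2 /x3 eK eL eS; lra.
have hab : (n + 2)%N%:R <= 2 * (n + 2)%N%:R :> R by rewrite eN; nra.
have pa : 0 <= p.[(n + 2)%N%:R] by rewrite pF.
have pb : p.[2 * (n + 2)%N%:R] <= 0 by rewrite pF.
have [r hr Fr] := @poly_root _ _ _ _ hab pa pb.
rewrite pF in Fr.
have r0 : 0 <= r by apply: le_trans hr; rewrite eN; nra.
pose X (y : ('I_(t * c - 1) + ('I_(n + 2 - (t + 1) * c) + 'I_(c - 1)))%type) : R :=
  match y with inl _ => x1 r | inr (inl _) => x2 r | inr (inr _) => x3 r end.
pose v : 'rV[R]_#|{: 'I_(t * c - 1) + ('I_(n + 2 - (t + 1) * c) + 'I_(c - 1))}| :=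
  \row_i X (enum_val i).
have ev : eigenvalue (distmx R
     (gjoin (complete_graph (t * c - 1)%N)
            (gunion (complete_graph (n + 2 - (t + 1) * c)%N) (empty_graph (c - 1)%N)))) r.
  apply/eigenvalueP; exists v.
    apply/rowP => j; rewrite !mxE.
    rewrite (eq_bigr (fun i => X (enum_val i) * (dd (enum_val i) (enum_val j))%:R)); last first.
      by move=> i _; rewrite /distmx !mxE gdist_fam.
    rewrite (@sum_ev _ _ (fun y => X y * (dd y (enum_val j))%:R)) block_sum.
    rewrite /X; case: (enum_val j) => [b|[b|b]];
      by apply/eqP; rewrite -subr_eq0; apply/eqP; rewrite -Fr /F /x1 /x2 /x3; ring.
  apply/eqP => /rowP /(_ (enum_rank (inr (inl (Ordinal hl))))).
  rewrite !mxE enum_rankK /X /x2 => h.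
  have : 0 < (r + 1) * (r + 2) by nra.
  by rewrite h ltxx.
apply: le_trans (_ : _ <= r) _; first by move: hr; rewrite natrD.
apply: (@lambda1_ge R _ _ r _ _ ev) => a' ha'; exact: (@eig_le_total _ _ _ _ ha').
Qed.
End G2.

Local Close Scope ring_scope.

Theorem mainTheorem6 (R : realType) (t n c : nat)
  (ht : (0 < t)%N) (hn : (4 * t ^ 2 + 10 * t <= n)%N)
  (hc : (3 <= c)%N) (hnc : ((t + 1) * c - 1 <= n)%N) :
  (lambda1 (distmx R
     (gjoin (complete_graph (2 * t - 1)%N)
            (gunion (complete_graph (n - 2 * t)%N) (complete_graph 1))))
     < (n + 2)%N%:R)%R
  /\
  ((n + 2)%N%:R <=
     lambda1 (distmx R
     (gjoin (complete_graph (t * c - 1)%N)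
            (gunion (complete_graph (n + 2 - (t + 1) * c)%N) (empty_graph (c - 1)%N)))))%R.
Proof.
split; [exact: g1 | exact: g2].
Qed.
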